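(* Let $K$ be a field of characteristic $0$, let $S=K[x_1,\ldots,x_n]$ be graded by $\deg x_i=a_i>0$, and let $I\subsetneq S$ be a graded ideal which is strongly Golod, i.e. $\partial(I)^2\subseteq I$, where $\partial(I)$ is the ideal generated by all $\partial f/\partial x_i$ with $f\in I$, $1\le i\le n$. Then for each minimal prime ideal $P$ of $I$, the (uniquely determined) $P$-primary component $Q$ of $I$ is strongly Golod, i.e. $\partial(Q)^2\subseteq Q$. *)

(* Defs.v *)
From mathcomp Require Import all_boot all_algebra.
From mathcomp Require Import mpoly.
Set Implicit Arguments. Unset Strict Implicit. Unset Printing Implicit Defensive.
Import GRing.Theory.
Local Open Scope ring_scope.

Section Ideals.
Variables (K : fieldType) (n : nat).
Notation S := {mpoly K[n]}.
Definition pset := S -> Prop.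

Definition subsetP (A B : pset) := forall f, A f -> B f.
Definition eqset (A B : pset) := forall f, A f <-> B f.

Definition is_ideal (I : pset) : Prop :=
  I 0 /\ (forall f g, I f -> I g -> I (f + g)) /\ (forall f g, I g -> I (f * g)).

Definition ideal_gen (G : pset) : pset := fun f =>
  exists s : seq (S * S), (forall p, p \in s -> G p.2) /\
    f = \sum_(p <- s) p.1 * p.2.

Definition ideal_mul (I J : pset) : pset :=
  ideal_gen (fun h => exists f g, I f /\ J g /\ h = f * g).

Definition deriv_ideal (I : pset) : pset :=
  ideal_gen (fun h => exists f (i : 'I_n), I f /\ h = mderiv i f).

Definition strongly_golod (I : pset) : Prop :=
  subsetP (ideal_mul (deriv_ideal I) (deriv_ideal I)) I.

Definition radical (I : pset) : pset := fun f => exists k : nat, I (f ^+ k).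

Definition is_prime (P : pset) : Prop :=
  is_ideal P /\ ~ P 1 /\ (forall f g, P (f * g) -> P f \/ P g).

Definition is_primary (Q : pset) : Prop :=
  is_ideal Q /\ ~ Q 1 /\ (forall f g, Q (f * g) -> Q f \/ radical Q g).

Definition minimal_prime (I P : pset) : Prop :=
  is_prime P /\ subsetP I P /\
  (forall P', is_prime P' -> subsetP I P' -> subsetP P' P -> subsetP P P').

Definition wdeg (a : 'I_n -> nat) (m : 'X_{1..n}) : nat := (\sum_(i < n) a i * m i)%N.

Definition hcomp (a : 'I_n -> nat) (d : nat) (f : S) : S :=
  \sum_(m <- msupp f | wdeg a m == d) f@_m *: 'X_[m].

Definition graded_ideal (a : 'I_n -> nat) (I : pset) : Prop :=
  is_ideal I /\ forall f d, I f -> I (hcomp a d f).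

End Ideals.

(* Main.v *)
Require Import Defs.
From mathcomp Require Import all_boot all_algebra.
From mathcomp Require Import mpoly.
From Stdlib Require Import Classical.
From mathcomp Require Import zify ring.
Local Open Scope ring_scope.
Import GRing.Theory.

Section Help.
Variables (K : fieldType) (n : nat).
Notation S := {mpoly K[n]}.

Lemma id_sum (Q : pset K n) (T : eqType) (s : seq T) (F : T -> S) :
  is_ideal Q -> (forall x, x \in s -> Q (F x)) -> Q (\sum_(x <- s) F x).
Proof.
move=> [Q0 [QD QM]]; elim: s => [|x s IH] H; first by rewrite big_nil.
rewrite big_cons; apply: QD; first by apply: H; rewrite inE eqxx.
by apply: IH => y ys; apply: H; rewrite inE ys orbT.
Qed.

Lemma id_mulr (Q : pset K n) f g : is_ideal Q -> Q f -> Q (f * g).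
Proof. by move=> [_ [_ QM]] Qf; rewrite mulrC; apply: QM. Qed.

Lemma id_mull (Q : pset K n) f g : is_ideal Q -> Q g -> Q (f * g).
Proof. by move=> [_ [_ QM]]; apply: QM. Qed.

Lemma rad_prime (Q : pset K n) : is_primary Q -> is_prime (radical Q).
Proof.
move=> [QI [Q1 QP]]; have QI' := QI; case: QI' => [Q0 [QD QM]].
split; [split; [|split]|split].
- by exists 1%N; rewrite expr1.
- move=> f g [a Ha] [b Hb]; exists (a + b)%N; rewrite exprDn.
  apply: id_sum => // i _; rewrite -mulr_natl; apply: id_mull => //.
  case: (leqP a ((a + b) - i)) => h.
    by apply: id_mulr => //; rewrite -(subnK h) exprD; apply: id_mull.
  apply: id_mull => //; have h2 : (b <= i)%N.
    by move: (ltn_ord i); rewrite ltnS; lia.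
  by rewrite -(subnK h2) exprD; apply: id_mull.
- move=> f g [k Hk]; exists k; rewrite exprMn; exact: id_mull.
- by move=> [k]; rewrite expr1n.
- move=> f g [k Hk]; rewrite exprMn in Hk; case: (QP _ _ Hk) => [h|[l Hl]].
    by left; exists k.
  by right; exists (k * l)%N; rewrite exprM.
Qed.

Lemma deriv_prod_in (Q I : pset K n) (P : pset K n) :
  is_primary Q -> eqset (radical Q) P -> strongly_golod I -> Defs.subsetP I Q ->
  (forall f, Q f -> exists s, ~ P s /\ I (s * f)) ->
  forall f g (i k : 'I_n), Q f -> Q g -> Q (mderiv i f * mderiv k g).
Proof.
move=> [QI [Q1 QP]] eqRP sgI IQ hs f g i k Qf Qg.
have [s [Ps Isf]] := hs f Qf; have [t [Pt Itg]] := hs g Qg.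
have H : I (mderiv i (s * f) * mderiv k (t * g)).
  apply: sgI; exists [:: (1, mderiv i (s * f) * mderiv k (t * g))]; split.
    move=> q; rewrite inE => /eqP -> /=.
    exists (mderiv i (s * f)), (mderiv k (t * g)); split; last split => //.
      exists [:: (1, mderiv i (s * f))]; split; last by rewrite big_seq1 mul1r.
      by move=> q1; rewrite inE => /eqP -> /=; exists (s * f), i.
    exists [:: (1, mderiv k (t * g))]; split; last by rewrite big_seq1 mul1r.
    by move=> q2; rewrite inE => /eqP -> /=; exists (t * g), k.
  by rewrite big_seq1 mul1r.
have H2 := IQ _ H; rewrite !mderivM in H2.
have e : mderiv i f * mderiv k g * (s * t) =
  (mderiv i s * f + s * mderiv i f) * (mderiv k t * g + t * mderiv k g)
  - (mderiv i s * f * (mderiv k t * g + t * mderiv k g)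
     + s * mderiv i f * (mderiv k t * g)).
  by rewrite mulrDl mulrDr; ring.
have QQ : Q (mderiv i f * mderiv k g * (s * t)).
  rewrite e; case: QI => Q0 [QD QM].
  have QN : forall x, Q x -> Q (- x).
    by move=> x Qx; rewrite -mulN1r; apply: (QM).
  apply: (QD) => //; apply: (QN); apply: (QD).
    by rewrite mulrC; apply: (QM); apply: (QM).
  by apply: (QM); apply: (QM).
case: (QP _ _ QQ) => // h; exfalso.
have [_ [_ Pr]] := @rad_prime Q (conj QI (conj Q1 QP)).
by case: (Pr _ _ h) => hh; [exact: Ps ((eqRP _).1 hh) | exact: Pt ((eqRP _).1 hh)].
Qed.
End Help.

Theorem corollary2p3 (K : fieldType) (n : nat) (a : 'I_n -> nat)
    (I : {mpoly K[n]} -> Prop) :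
  [pchar K] =i pred0 ->
  (forall i, (0 < a i)%N) ->
  graded_ideal a I -> ~ I 1 ->
  strongly_golod I ->
  forall (P : {mpoly K[n]} -> Prop), minimal_prime I P ->
  forall (m : nat) (Qs : 'I_m -> {mpoly K[n]} -> Prop),
    (forall j, is_primary (Qs j)) ->
    eqset I (fun f => forall j, Qs j f) ->
    (forall j k, j != k -> ~ eqset (radical (Qs j)) (radical (Qs k))) ->
    forall j, eqset (radical (Qs j)) P -> strongly_golod (Qs j).
Proof.
move=> _ _ _ _ sgI P [Ppr [IP Pmin]] m Qs Qprim eqI Qdist j radj.
have [[P0 [PD PM]] [P1 Pp]] := Ppr.
have Ppow : forall x l, P (x ^+ l) -> P x.
  move=> x; elim=> [|l IH]; first by rewrite expr0.
  by rewrite exprS => /Pp [//|]; apply: IH.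
have ex : forall k, exists u, k != j -> Qs k u /\ ~ P u.
  move=> k; case: (eqVneq k j) => [->|kj]; first by exists 0.
  apply: NNPP => hne.
  have sub : forall u, Qs k u -> P u.
    move=> u Qu; apply: NNPP => Pu; apply: hne; exists u => _; by split.
  apply: (Qdist k j) => //.
  have radsub : forall x, radical (Qs k) x -> P x.
    by move=> x [l Hl]; apply: (Ppow x l); apply: sub.
  have Psub : forall x, P x -> radical (Qs k) x.
    apply: (Pmin (radical (Qs k))) => //.
      exact: rad_prime.
    by move=> x Ix; exists 1%N; rewrite expr1; apply: (eqI x).1.
  move=> x; split => h.
    by apply/(radj x).2; apply: radsub.
  by apply: Psub; apply/(radj x).1.
have [u hu] := fin_all_exists ex.
have hs : forall f, Qs j f -> exists s, ~ P s /\ I (s * f).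
  move=> f Qf; exists (\prod_(k | k != j) u k); split.
    apply: (big_ind (fun x => ~ P x)) => //.
      by move=> x y nx ny /Pp [].
    by move=> k kj; case: (hu k kj).
  apply/(eqI _).2 => k; case: (eqVneq k j) => [->|kj].
    by apply: id_mull => //; case: (Qprim j).
  have QkI : is_ideal (Qs k) by case: (Qprim k).
  rewrite (bigD1 k) //=; apply: id_mulr => //; apply: id_mulr => //.
  by case: (hu k kj).
have QjI : is_ideal (Qs j) by case: (Qprim j).
have key := @deriv_prod_in K n (Qs j) I P (Qprim j) radj sgI
  (fun f If => (eqI f).1 If j) hs.
move=> h [s [Hs ->]]; apply: id_sum => // p ps.
have [x [y [[s1 [Hs1 ->]] [[s2 [Hs2 ->]] ->]]]] := Hs p ps.
apply: id_mull => //; rewrite big_distrl; apply: id_sum => // q qs.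
rewrite big_distrr; apply: id_sum => // r rs.
rewrite /= mulrACA; apply: id_mull => //.
have [f [i [Qf ->]]] := Hs1 q qs; have [g [k [Qg ->]]] := Hs2 r rs.
exact: key.
Qed.
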